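(* Let $k\ge1$ and $\delta\notin I_k=\{-\frac{p}{2(n+1)}:p\in\{k-1,\dots,2k-2\}\}$. Define $s_{k-1}:R^{k-1}\to R^k$ by $s_{k-1}(S)=-\sum_{l=1}^kb_{k,l}\,X^l\big(i(\alpha)^{l-1}(S)\big)$, where $b_{k,l}=\big(\prod_{j=1}^l(-r(j,k-j))\big)^{-1}$. Then $i(\alpha)\circ s_{k-1}=\mathrm{Id}$ on $R^{k-1}$.
   Context: Let $n\ge1$, $M=\mathbb{R}^{2n+1}$ with coordinates $(q^1,\dots,q^n,p^1,\dots,p^n,t)$. For $\mu\in\mathbb{R}$, $\mathcal{S}^k_\mu$ denotes the space of smooth functions $S(x,\xi)$ on $M\times\mathbb{R}^{2n+1}$ homogeneous polynomial of degree $k$ in $\xi=(\xi_{q^1},\dots,\xi_{q^n},\xi_{p^1},\dots,\xi_{p^n},\xi_t)$. Fix $\delta\in\mathbb{R}$ and set $R^k=\mathcal{S}^k_{\delta+\frac{k}{n+1}}$ for $k\ge0$, $R^{j}=0$ for $j<0$. Let $E_s=\sum_i(p^i\partial_{p^i}+q^i\partial_{q^i})$, $\langle E_s,\xi\rangle=\sum_i(p^i\xi_{p^i}+q^i\xi_{q^i})$, $D(S)=\sum_i(\xi_{q^i}\partial_{p^i}S-\xi_{p^i}\partial_{q^i}S)+\xi_tE_s(S)-\langle E_s,\xi\rangle\partial_tS$. Operators: $i(\alpha):R^k\to R^{k-1}$, $i(\alpha)(S)=\frac12\big(\sum_i(p^i\partial_{\xi_{q^i}}S-q^i\partial_{\xi_{p^i}}S)-\partial_{\xi_t}S\big)$;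 $X:R^k\to R^{k+1}$, $X(S)=D(S)+(2(n+1)\delta+k)\xi_tS$. Set $r(l,k)=-\frac{l}{2}\big(2(n+1)\delta+2k+l-1\big)$ (for $\delta\notin I_k$ the numbers $r(j,k-j)$, $1\le j\le k$, are nonzero). *)

(* Defs.v *)
From HB Require Import structures.
From mathcomp Require Import all_boot all_order all_algebra.
From mathcomp Require Import all_classical all_reals all_analysis.
Set Implicit Arguments. Unset Strict Implicit. Unset Printing Implicit Defensive.
Import Order.TTheory GRing.Theory Num.Theory.
Import numFieldNormedType.Exports.
Local Open Scope ring_scope.

(* Points of M = R^(2n+1) and covectors xi are row vectors indexed by
   'I_(n+n+1): indices 0..n-1 are q^i, n..2n-1 are p^i, 2n is t. *)
Definition V (R : realType) (n : nat) := 'rV[R]_(n + n + 1).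

Definition qidx (n : nat) (i : 'I_n) : 'I_(n + n + 1) := lshift 1 (lshift n i).
Definition pidx (n : nat) (i : 'I_n) : 'I_(n + n + 1) := lshift 1 (rshift n i).
Definition tidx (n : nat) : 'I_(n + n + 1) := rshift (n + n) (ord0 : 'I_1).

Definition evec (R : realType) (n : nat) (j : 'I_(n + n + 1)) : V R n :=
  delta_mx 0 j.

Fixpoint iterD (R : realType) (n : nat) (vs : seq (V R n)) (f : V R n -> R)
  : V R n -> R :=
  match vs with
  | [::] => f
  | v :: vs' => fun x => 'D_v (iterD vs' f) x
  end.

Definition smooth (R : realType) (n : nat) (f : V R n -> R) : Prop :=
  forall (vs : seq (V R n)) (x : V R n), differentiable (iterD vs f) x.

Definition symb (R : realType) (n : nat) := V R n -> V R n -> R.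

(* S in S^k_mu (the weight mu does not affect the underlying function space):
   S is a homogeneous polynomial of degree k in xi with smooth coefficients in x *)
Definition is_symbol (R : realType) (n k : nat) (S : symb R n) : Prop :=
  exists c : {ffun 'I_(n + n + 1) -> 'I_k.+1} -> V R n -> R,
    (forall a, smooth (c a)) /\
    forall x xi : V R n,
      S x xi = \sum_(a : {ffun 'I_(n + n + 1) -> 'I_k.+1} | (\sum_i (a i : nat) == k)%N)
                 c a x * \prod_i (xi 0 i) ^+ (a i).

Definition dx (R : realType) (n : nat) (j : 'I_(n + n + 1)) (S : symb R n)
  : symb R n := fun x xi => 'D_(@evec R n j) (fun y => S y xi) x.
Definition dxi (R : realType) (n : nat) (j : 'I_(n + n + 1)) (S : symb R n)
  : symb R n := fun x xi => 'D_(@evec R n j) (S x) xi.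

Definition EsS (R : realType) (n : nat) (S : symb R n) : symb R n :=
  fun x xi => \sum_(i < n) (x 0 (pidx i) * dx (pidx i) S x xi
                            + x 0 (qidx i) * dx (qidx i) S x xi).

Definition Esxi (R : realType) (n : nat) (x xi : V R n) : R :=
  \sum_(i < n) (x 0 (pidx i) * xi 0 (pidx i) + x 0 (qidx i) * xi 0 (qidx i)).

Definition Dop (R : realType) (n : nat) (S : symb R n) : symb R n :=
  fun x xi =>
    \sum_(i < n) (xi 0 (qidx i) * dx (pidx i) S x xi
                  - xi 0 (pidx i) * dx (qidx i) S x xi)
    + xi 0 (tidx n) * EsS S x xi
    - Esxi x xi * dx (tidx n) S x xi.

Definition ialpha (R : realType) (n : nat) (S : symb R n) : symb R n :=
  fun x xi =>
    2^-1 * (\sum_(i < n) (x 0 (pidx i) * dxi (qidx i) S x xi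
                          - x 0 (qidx i) * dxi (pidx i) S x xi)
            - dxi (tidx n) S x xi).

(* X : R^m -> R^(m+1) *)
Definition Xop (R : realType) (n : nat) (delta : R) (m : nat) (S : symb R n)
  : symb R n :=
  fun x xi => Dop S x xi
              + (2 * (n + 1)%:R * delta + m%:R) * xi 0 (tidx n) * S x xi.

(* X^l applied to an element of R^m : X_(m+l-1) o ... o X_m *)
Fixpoint Xiter (R : realType) (n : nat) (delta : R) (l m : nat) (S : symb R n)
  : symb R n :=
  match l with
  | 0 => S
  | l'.+1 => Xop delta (m + l') (Xiter delta l' m S)
  end.

Definition rcoef (R : realType) (n : nat) (delta : R) (l k : nat) : R :=
  - (l%:R / 2) * (2 * (n + 1)%:R * delta + 2 * k%:R + l%:R - 1).

Definition bcoef (R : realType) (n : nat) (delta : R) (k l : nat) : R :=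
  (\prod_(1 <= j < l.+1) (- rcoef n delta j (k - j)))^-1.

Definition s_op (R : realType) (n : nat) (delta : R) (k : nat) (S : symb R n)
  : symb R n :=
  fun x xi => - \sum_(1 <= l < k.+1)
      bcoef n delta k l * Xiter delta l (k - l) (iter l.-1 (@ialpha R n) S) x xi.

(* Main.v *)
Require Import Defs.
From HB Require Import structures.
From mathcomp Require Import all_boot all_order all_algebra.
From mathcomp Require Import all_classical all_reals all_analysis.
From mathcomp Require Import ring zify.
Import Order.TTheory GRing.Theory Num.Theory.
Import numFieldNormedType.Exports.

Module A.
From mathcomp Require Import all_boot all_order all_algebra.
From mathcomp Require Import all_classical all_reals all_analysis.
From mathcomp Require Import ring zify.
Import Order.TTheory GRing.Theory Num.Theory.
Import numFieldNormedType.Exports.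
Local Open Scope ring_scope.
Set Implicit Arguments. Unset Strict Implicit. Unset Printing Implicit Defensive.

Section A.
Variables (R : realType) (n : nat).
Local Notation VV := (V R n).

Lemma dD (f g : VV -> R) x v : derivable f x v -> derivable g x v ->
  'D_v (fun y => f y + g y) x = 'D_v f x + 'D_v g x.
Proof. move=> hf hg; exact: (deriveD hf hg). Qed.

Lemma dM (f g : VV -> R) x v : derivable f x v -> derivable g x v ->
  'D_v (fun y => f y * g y) x = f x * 'D_v g x + g x * 'D_v f x.
Proof. move=> hf hg; exact: (deriveM hf hg). Qed.

Lemma dN (f : VV -> R) x v : derivable f x v ->
  'D_v (fun y => - f y) x = - 'D_v f x.
Proof. move=> hf; exact: (deriveN hf). Qed.

Lemma dC (c : R) x v : 'D_v (fun _ : VV => c) x = 0.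
Proof. exact: (derive_cst c). Qed.

Lemma derD (f g : VV -> R) x v : derivable f x v -> derivable g x v ->
  derivable (fun y => f y + g y) x v.
Proof. move=> hf hg; exact: (derivableD hf hg). Qed.
Lemma derM (f g : VV -> R) x v : derivable f x v -> derivable g x v ->
  derivable (fun y => f y * g y) x v.
Proof. move=> hf hg; exact: (derivableM hf hg). Qed.
Lemma derN (f : VV -> R) x v : derivable f x v -> derivable (fun y => - f y) x v.
Proof. move=> hf; exact: (derivableN hf). Qed.
Lemma derC (c : R) x v : derivable (fun _ : VV => c) x v.
Proof. exact: derivable_cst. Qed.

Lemma derco (j : 'I_(n + n + 1)) x v : derivable (fun y : VV => y 0 j) x v.
Proof. apply: diff_derivable; exact: differentiable_coord. Qed.

Lemma dco (j : 'I_(n + n + 1)) x v : 'D_v (fun y : VV => y 0 j) x = v 0 j.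
Proof.
have := derive_mx (@derivable_id _ _ x v).
rewrite derive_id => /(congr1 (fun M : VV => M 0 j)); rewrite mxE => ->.
done.
Qed.

End A.

Section A2.
Variables (R : realType) (n : nat).
Local Notation VV := (V R n).



Lemma dersum (I : Type) (r : seq I) (P : pred I) (F : I -> VV -> R) x v :
  (forall i, P i -> derivable (F i) x v) ->
  derivable (fun y => \sum_(i <- r | P i) F i y) x v.
Proof.
move=> hF; elim: r => [|j r IH]; first by under eq_fun do rewrite big_nil; exact: derC.
under eq_fun do rewrite big_cons.
case: (boolP (P j)) => Pj //; exact: derD (hF _ Pj) IH.
Qed.

Lemma dsum (I : Type) (r : seq I) (P : pred I) (F : I -> VV -> R) x v :
  (forall i, P i -> derivable (F i) x v) ->
  'D_v (fun y => \sum_(i <- r | P i) F i y) x = \sum_(i <- r | P i) 'D_v (F i) x.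
Proof.
move=> hF; elim: r => [|i r IH].
  under eq_fun do rewrite big_nil. by rewrite big_nil dC.
under eq_fun do rewrite big_cons. rewrite big_cons.
case: (boolP (P i)) => Pi; last exact: IH.
by rewrite dD ?IH //; [exact: hF | exact: dersum].
Qed.

End A2.

End A.

Module B.
Import A.
From mathcomp Require Import all_boot all_order all_algebra.
From mathcomp Require Import all_classical all_reals all_analysis.
From mathcomp Require Import ring zify.
Import Order.TTheory GRing.Theory Num.Theory.
Import numFieldNormedType.Exports.
Local Open Scope ring_scope.
Set Implicit Arguments. Unset Strict Implicit. Unset Printing Implicit Defensive.

Section B.
Variables (R : realType) (n : nat).
Local Notation VV := (V R n).
Local Notation N := (n + n + 1)%N.

Lemma iterD_cat (vs ws : seq VV) (f : VV -> R) :
  Defs.iterD vs (Defs.iterD ws f) = Defs.iterD (vs ++ ws) f.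
Proof. elim: vs => [|v vs IH] //=; by rewrite IH. Qed.

Lemma smooth_D (f : VV -> R) v : smooth f -> smooth (fun x => 'D_v f x).
Proof.
move=> sf vs x.
have -> : (fun x => 'D_v f x) = Defs.iterD [:: v] f by [].
rewrite iterD_cat; exact: sf.
Qed.

Inductive G : (VV -> R) -> Prop :=
 | Gsm f : smooth f -> G f
 | Gcst (c : R) : G (fun _ => c)
 | Gco (j : 'I_N) : G (fun y => y 0 j)
 | Gadd f g : G f -> G g -> G (fun y => f y + g y)
 | Gmul f g : G f -> G g -> G (fun y => f y * g y).

Lemma G_der f : G f -> (forall x v, derivable f x v) /\ (forall v, G (fun x => 'D_v f x)).
Proof.
elim=> {f} [f sf|c|j|f g _ [df Gf] _ [dg Gg]|f g Hf [df Gf] Hg [dg Gg]].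
- split; first by move=> x v; apply: diff_derivable; exact: (sf [::]).
  by move=> v; apply: Gsm; exact: smooth_D.
- split=> [x v|v]; first exact: derC.
  under eq_fun do rewrite dC. exact: Gcst.
- split=> [x v|v]; first exact: derco.
  under eq_fun do rewrite dco. exact: Gcst.
- split=> [x v|v]; first exact: derD.
  under eq_fun => x do rewrite (dD (df x v) (dg x v)). exact: (Gadd (Gf v) (Gg v)).
- split=> [x v|v]; first exact: derM.
  under eq_fun => x do rewrite (dM (df x v) (dg x v)).
  exact: (Gadd (Gmul Hf (Gg v)) (Gmul Hg (Gf v))).
Qed.

Lemma G_derivable f x v : G f -> derivable f x v.
Proof. by move=> /G_der[+ _]; apply. Qed.
Lemma G_D f v : G f -> G (fun x => 'D_v f x).
Proof. by move=> /G_der[_ +]; apply. Qed.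

End B.

End B.

Module C.
Import A B.
From mathcomp Require Import all_boot all_order all_algebra.
From mathcomp Require Import all_classical all_reals all_analysis.
From mathcomp Require Import ring zify.
Import Order.TTheory GRing.Theory Num.Theory.
Import numFieldNormedType.Exports.
Local Open Scope ring_scope.
Set Implicit Arguments. Unset Strict Implicit. Unset Printing Implicit Defensive.

Section C.
Variables (R : realType) (n : nat).
Local Notation VV := (V R n).
Local Notation N := (n + n + 1)%N.
Local Notation symb := (symb R n).
Local Notation G := (@G R n).

Inductive Hom : nat -> symb -> Prop :=
 | H0 f : G f -> Hom 0 (fun x _ => f x)
 | Hxi m (j : 'I_N) S : Hom m S -> Hom m.+1 (fun x xi => xi 0 j * S x xi)
 | Hadd m S T : Hom m S -> Hom m T -> Hom m (fun x xi => S x xi + T x xi)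
 | Hmul m f S : G f -> Hom m S -> Hom m (fun x xi => f x * S x xi).

Lemma Hom_ext m S T : Hom m S -> (forall x xi, S x xi = T x xi) -> Hom m T.
Proof.
move=> HS e; have -> // : T = S.
by apply/funext => x; apply/funext => xi; rewrite e.
Qed.

Lemma Hom0 m : Hom m (fun _ _ => 0).
Proof.
elim: m => [|m IH]; first exact: (H0 (@Gcst R n 0)).
apply: Hom_ext (Hxi (tidx n) IH) _ => x xi; by rewrite mulr0.
Qed.

Lemma HomZ m (c : R) S : Hom m S -> Hom m (fun x xi => c * S x xi).
Proof. move=> HS; exact: (Hmul (@Gcst R n c) HS). Qed.

Lemma HomN m S : Hom m S -> Hom m (fun x xi => - S x xi).
Proof. move=> HS; apply: Hom_ext (HomZ (-1) HS) _ => x xi; by rewrite mulN1r. Qed.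

Lemma HomB m S T : Hom m S -> Hom m T -> Hom m (fun x xi => S x xi - T x xi).
Proof. move=> HS HT; exact: (Hadd HS (HomN HT)). Qed.

Lemma Homco m (j : 'I_N) S : Hom m S -> Hom m (fun x xi => x 0 j * S x xi).
Proof. move=> HS; exact: (Hmul (Gco _ j) HS). Qed.

Lemma Hom_sum m (I : Type) (r : seq I) (P : pred I) (F : I -> symb) :
  (forall i, P i -> Hom m (F i)) -> Hom m (fun x xi => \sum_(i <- r | P i) F i x xi).
Proof.
move=> hF; elim: r => [|i r IH].
  apply: Hom_ext (Hom0 m) _ => x xi; by rewrite big_nil.
case: (boolP (P i)) => Pi.
  apply: Hom_ext (Hadd (hF _ Pi) IH) _ => x xi; by rewrite big_cons Pi.
apply: Hom_ext IH _ => x xi; by rewrite big_cons (negbTE Pi).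
Qed.

Definition DX (S : symb) := forall x xi v, derivable (fun y => S y xi) x v.
Definition DXI (S : symb) := forall x xi v, derivable (S x) xi v.

Lemma Hom_DX m S : Hom m S -> DX S.
Proof.
elim=> {m S} [f Gf|m j S _ IH|m S T _ IHS _ IHT|m f S Gf _ IH] x xi v.
- exact: G_derivable.
- apply: derM; [exact: derC | exact: IH].
- exact: derD (IHS _ _ _) (IHT _ _ _).
- apply: derM; [exact: G_derivable | exact: IH].
Qed.

Lemma Hom_DXI m S : Hom m S -> DXI S.
Proof.
elim=> {m S} [f Gf|m j S _ IH|m S T _ IHS _ IHT|m f S Gf _ IH] x xi v.
- exact: derC.
- apply: derM; [exact: derco | exact: IH].
- exact: derD (IHS _ _ _) (IHT _ _ _).
- apply: derM; [exact: derC | exact: IH].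
Qed.

Lemma dx_add k S T x xi : DX S -> DX T ->
  dx k (fun x xi => S x xi + T x xi) x xi = dx k S x xi + dx k T x xi.
Proof. move=> hS hT; exact: dD. Qed.

Lemma dx_mul k (f : VV -> R) S x xi : (forall x v, derivable f x v) -> DX S ->
  dx k (fun x xi => f x * S x xi) x xi = f x * dx k S x xi + 'D_((@evec R n k)) f x * S x xi.
Proof. move=> hf hS; by rewrite /dx (dM (hf _ _) (hS _ _ _)) [S x xi * _]mulrC. Qed.

Lemma dx_xi k (j : 'I_N) S x xi : DX S ->
  dx k (fun x xi => xi 0 j * S x xi) x xi = xi 0 j * dx k S x xi.
Proof. move=> hS; by rewrite /dx (dM (@derC R n _ _ _) (hS _ _ _)) dC mulr0 addr0. Qed.

Lemma dx_cst k (f : VV -> R) x xi : dx k (fun x _ => f x) x xi = 'D_((@evec R n k)) f x.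
Proof. by []. Qed.

Lemma dx_sum k (I : Type) (r : seq I) (P : pred I) (F : I -> symb) x xi :
  (forall i, P i -> DX (F i)) ->
  dx k (fun x xi => \sum_(i <- r | P i) F i x xi) x xi = \sum_(i <- r | P i) dx k (F i) x xi.
Proof. move=> hF; rewrite /dx dsum //; move=> i Pi; exact: hF. Qed.

Lemma dxi_add k S T x xi : DXI S -> DXI T ->
  dxi k (fun x xi => S x xi + T x xi) x xi = dxi k S x xi + dxi k T x xi.
Proof. move=> hS hT; exact: dD. Qed.

Lemma dxi_mul k (f : VV -> R) S x xi : DXI S ->
  dxi k (fun x xi => f x * S x xi) x xi = f x * dxi k S x xi.
Proof. move=> hS; by rewrite /dxi (dM (@derC R n _ _ _) (hS _ _ _)) dC mulr0 addr0. Qed.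

Lemma dxi_xi k (j : 'I_N) S x xi : DXI S ->
  dxi k (fun x xi => xi 0 j * S x xi) x xi = xi 0 j * dxi k S x xi + (@evec R n k) 0 j * S x xi.
Proof. move=> hS; by rewrite /dxi (dM (@derco R n _ _ _) (hS _ _ _)) dco [S x xi * _]mulrC. Qed.

Lemma dxi_cst k (f : VV -> R) x xi : dxi k (fun x _ => f x) x xi = 0.
Proof. exact: dC. Qed.

Lemma dxi_sum k (I : Type) (r : seq I) (P : pred I) (F : I -> symb) x xi :
  (forall i, P i -> DXI (F i)) ->
  dxi k (fun x xi => \sum_(i <- r | P i) F i x xi) x xi = \sum_(i <- r | P i) dxi k (F i) x xi.
Proof. move=> hF; rewrite /dxi dsum //; move=> i Pi; exact: hF. Qed.

End C.

End C.

Module D.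
Import A B C.
From mathcomp Require Import all_boot all_order all_algebra.
From mathcomp Require Import all_classical all_reals all_analysis.
From mathcomp Require Import ring zify.
Import Order.TTheory GRing.Theory Num.Theory.
Import numFieldNormedType.Exports.
Local Open Scope ring_scope.
Set Implicit Arguments. Unset Strict Implicit. Unset Printing Implicit Defensive.

Section D.
Variables (R : realType) (n : nat).
Local Notation VV := (V R n).
Local Notation N := (n + n + 1)%N.
Local Notation symb := (symb R n).
Local Notation G := (@B.G R n).
Local Notation Hom := (@C.Hom R n).
Local Notation DX := (@DX R n).
Local Notation DXI := (@DXI R n).
Local Notation ev k := (@evec R n k).

Lemma evecE (k j : 'I_N) : ev k 0 j = (k == j)%:R.
Proof. by rewrite /evec mxE eqxx /= eq_sym. Qed.

Lemma sum_delta (F : 'I_N -> R) (l : 'I_N) : \sum_(j < N) F j * ev j 0 l = F l.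
Proof.
rewrite (bigD1 l) //= evecE eqxx mulr1 big1 ?addr0 // => j /negbTE jl.
by rewrite evecE jl mulr0.
Qed.

Lemma funext2 (S T : symb) : (forall x xi, S x xi = T x xi) -> S = T.
Proof. by move=> e; apply/funext => x; apply/funext => xi; rewrite e. Qed.

Lemma DX_add S T : DX S -> DX T -> DX (fun x xi => S x xi + T x xi).
Proof. move=> hS hT x xi v; exact: derD (hS _ _ _) (hT _ _ _). Qed.
Lemma DX_mul (f : VV -> R) S : (forall x v, derivable f x v) -> DX S ->
  DX (fun x xi => f x * S x xi).
Proof. move=> hf hS x xi v; exact: derM (hf _ _) (hS _ _ _). Qed.
Lemma DX_xi (l : 'I_N) S : DX S -> DX (fun x xi => xi 0 l * S x xi).
Proof. move=> hS x xi v; exact: derM (@derC R n _ _ _) (hS _ _ _). Qed.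
Lemma DX_c (c : R) S : DX S -> DX (fun x xi => c * S x xi).
Proof. move=> hS x xi v; exact: derM (@derC R n _ _ _) (hS _ _ _). Qed.

Lemma DXI_add S T : DXI S -> DXI T -> DXI (fun x xi => S x xi + T x xi).
Proof. move=> hS hT x xi v; exact: derD (hS _ _ _) (hT _ _ _). Qed.
Lemma DXI_f (f : VV -> R) S : DXI S -> DXI (fun x xi => f x * S x xi).
Proof. move=> hS x xi v; exact: derM (@derC R n _ _ _) (hS _ _ _). Qed.
Lemma DXI_xi (l : 'I_N) S : DXI S -> DXI (fun x xi => xi 0 l * S x xi).
Proof. move=> hS x xi v; exact: derM (@derco R n _ _ _) (hS _ _ _). Qed.

Lemma Hom_dx m k S : Hom m S -> Hom m (dx k S).
Proof.
elim=> {m S} [f Gf|m j S HS IH|m S T HS IHS HT IHT|m f S Gf HS IH].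
- apply: Hom_ext (H0 (G_D (ev k) Gf)) _ => x xi; by rewrite dx_cst.
- apply: Hom_ext (Hxi j IH) _ => x xi; by rewrite dx_xi //; exact: Hom_DX HS.
- apply: Hom_ext (Hadd IHS IHT) _ => x xi; rewrite dx_add //; [exact: Hom_DX HS|exact: Hom_DX HT].
- apply: Hom_ext (Hadd (Hmul Gf IH) (Hmul (G_D (ev k) Gf) HS)) _ => x xi.
  rewrite dx_mul //; [move=> *; exact: G_derivable | exact: Hom_DX HS].
Qed.

Lemma Hom_dxi m k S : Hom m S -> Hom m.-1 (dxi k S) /\ (m = 0%N -> forall x xi, dxi k S x xi = 0).
Proof.
elim=> {m S} [f Gf|m j S HS [IH1 IH0]|m S T HS [IHS1 IHS0] HT [IHT1 IHT0]|m f S Gf HS [IH1 IH0]].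
- split; last by move=> _ x xi; rewrite dxi_cst.
  apply: Hom_ext (Hom0 _ _ 0) _ => x xi; by rewrite dxi_cst.
- split => //; rewrite /=.
  have dS := Hom_DXI HS.
  case: m HS IH1 IH0 dS => [|m] HS IH1 IH0 dS.
    apply: Hom_ext (HomZ (ev k 0 j) HS) _ => x xi.
    by rewrite dxi_xi // IH0 // mulr0 add0r.
  apply: Hom_ext (Hadd (Hxi j IH1) (HomZ (ev k 0 j) HS)) _ => x xi.
  by rewrite dxi_xi.
- have dS := Hom_DXI HS; have dT := Hom_DXI HT.
  split; first (apply: Hom_ext (Hadd IHS1 IHT1) _ => x xi; by rewrite dxi_add).
  move=> m0 x xi; by rewrite dxi_add ?IHS0 ?IHT0 ?addr0.
- split; first (apply: Hom_ext (Hmul Gf IH1) _ => x xi; rewrite dxi_mul //; exact: Hom_DXI HS).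
  move=> m0 x xi; rewrite dxi_mul ?IH0 ?mulr0 //; exact: Hom_DXI HS.
Qed.

Lemma Hom_dxi1 m k S : Hom m S -> Hom m.-1 (dxi k S).
Proof. by move=> /(Hom_dxi k) []. Qed.
Lemma Hom_dxi0 k S : Hom 0 S -> forall x xi, dxi k S x xi = 0.
Proof. by move=> /(Hom_dxi k) [_]; apply. Qed.

Lemma dx_zero (k : 'I_N) (x xi : VV) : dx k (fun _ _ => 0 : R) x xi = 0.
Proof. exact: dC. Qed.

Lemma comm_dx_dxi m S : Hom m S -> forall i j x xi,
  dx i (dxi j S) x xi = dxi j (dx i S) x xi.
Proof.
elim=> {m S} [f Gf|m l S HS IH|m S T HS IHS HT IHT|m f S Gf HS IH] i j x xi.
- have -> : dxi j (fun x _ => f x) = (fun _ _ => 0) by apply: funext2 => ??; exact: dxi_cst.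
  by rewrite dx_zero /dxi /dx dC.
- have dS := Hom_DX HS; have dS' := Hom_DXI HS.
  have dSj := Hom_DX (Hom_dxi1 j HS); have dSi' := Hom_DXI (Hom_dx i HS).
  have -> : dxi j (fun x xi => xi 0 l * S x xi) =
     (fun x xi => xi 0 l * dxi j S x xi + ev j 0 l * S x xi).
    by apply: funext2 => ??; rewrite dxi_xi.
  have -> : dx i (fun x xi => xi 0 l * S x xi) = (fun x xi => xi 0 l * dx i S x xi).
    by apply: funext2 => ??; rewrite dx_xi.
  rewrite dx_add; [|exact: DX_xi|exact: DX_c].
  rewrite dx_xi // dxi_xi // IH; congr (_ + _).
  rewrite (dx_mul i (f := fun _ => ev j 0 l)) //; first by rewrite dC mul0r addr0.
- have dS := Hom_DX HS; have dT := Hom_DX HT.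
  have dS' := Hom_DXI HS; have dT' := Hom_DXI HT.
  have -> : dxi j (fun x xi => S x xi + T x xi) = (fun x xi => dxi j S x xi + dxi j T x xi).
    by apply: funext2 => ??; rewrite dxi_add.
  have -> : dx i (fun x xi => S x xi + T x xi) = (fun x xi => dx i S x xi + dx i T x xi).
    by apply: funext2 => ??; rewrite dx_add.
  rewrite dx_add; [|exact: Hom_DX (Hom_dxi1 j HS)|exact: Hom_DX (Hom_dxi1 j HT)].
  rewrite dxi_add; [|exact: Hom_DXI (Hom_dx i HS)|exact: Hom_DXI (Hom_dx i HT)].
  by rewrite IHS IHT.
- have df : forall x v, derivable f x v by move=> *; exact: G_derivable.
  have -> : dxi j (fun x xi => f x * S x xi) = (fun x xi => f x * dxi j S x xi).
    by apply: funext2 => ??; rewrite dxi_mul //; exact: Hom_DXI HS.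
  have -> : dx i (fun x xi => f x * S x xi) =
     (fun x xi => f x * dx i S x xi + 'D_(ev i) f x * S x xi).
    by apply: funext2 => ??; rewrite dx_mul //; exact: Hom_DX HS.
  rewrite dx_mul //; last exact: Hom_DX (Hom_dxi1 j HS).
  rewrite dxi_add; [|apply: DXI_f; exact: Hom_DXI (Hom_dx i HS)|apply: DXI_f; exact: Hom_DXI HS].
  by rewrite !dxi_mul ?IH //; [exact: Hom_DXI HS | exact: Hom_DXI (Hom_dx i HS)].
Qed.

Lemma euler m S : Hom m S -> forall x xi : VV,
  \sum_(j < N) xi 0 j * dxi j S x xi = m%:R * S x xi.
Proof.
elim=> {m S} [f Gf|m l S HS IH|m S T HS IHS HT IHT|m f S Gf HS IH] x xi.
- by rewrite mul0r big1 // => j _; rewrite dxi_cst mulr0.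
- have dS' := Hom_DXI HS.
  transitivity (xi 0 l * \sum_(j < N) xi 0 j * dxi j S x xi + (\sum_(j < N) xi 0 j * ev j 0 l) * S x xi).
    rewrite mulr_sumr mulr_suml -big_split /=; apply: eq_bigr => j _; rewrite dxi_xi //; ring.
  by rewrite IH (sum_delta (fun j => xi 0 j)) -natr1; ring.
- have dS' := Hom_DXI HS; have dT' := Hom_DXI HT.
  under eq_bigr do rewrite dxi_add // mulrDr.
  by rewrite big_split /= IHS IHT mulrDr.
- have dS' := Hom_DXI HS.
  under eq_bigr do rewrite dxi_mul // mulrCA.
  by rewrite -mulr_sumr IH mulrCA.
Qed.

End D.

End D.

Module E.
Import A B C D.
From mathcomp Require Import all_boot all_order all_algebra.
From mathcomp Require Import all_classical all_reals all_analysis.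
From mathcomp Require Import ring zify.
Import Order.TTheory GRing.Theory Num.Theory.
Import numFieldNormedType.Exports.
Local Open Scope ring_scope.
Set Implicit Arguments. Unset Strict Implicit. Unset Printing Implicit Defensive.

Section E.
Variables (R : realType) (n : nat).
Local Notation VV := (V R n).
Local Notation N := (n + n + 1)%N.
Local Notation symb := (symb R n).
Local Notation G := (@B.G R n).
Local Notation Hom := (@C.Hom R n).
Local Notation DX := (@DX R n).
Local Notation DXI := (@DXI R n).
Local Notation ev k := (@evec R n k).

Lemma DXI_mul2 S T : DXI S -> DXI T -> DXI (fun x xi => S x xi * T x xi).
Proof. move=> hS hT x xi v; exact: derM (hS _ _ _) (hT _ _ _). Qed.

Lemma dxi_mul2 k S T x xi : DXI S -> DXI T ->
  dxi k (fun x xi => S x xi * T x xi) x xi = S x xi * dxi k T x xi + T x xi * dxi k S x xi.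
Proof. move=> hS hT; exact: (dM (hS _ _ _) (hT _ _ _)). Qed.

Lemma commPQ (a : 'I_N -> VV -> R) (b : 'I_N -> symb) T x xi :
  (forall j x v, derivable (a j) x v) -> (forall k, DXI (b k)) ->
  (forall k, DXI (dx k T)) -> (forall j, DX (dxi j T)) ->
  (forall k j x xi, dxi j (dx k T) x xi = dx k (dxi j T) x xi) ->
  \sum_(j < N) a j x * dxi j (fun x xi => \sum_(k < N) b k x xi * dx k T x xi) x xi
  - \sum_(k < N) b k x xi * dx k (fun x xi => \sum_(j < N) a j x * dxi j T x xi) x xi
  = \sum_(k < N) (\sum_(j < N) a j x * dxi j (b k) x xi) * dx k T x xi
    - \sum_(j < N) (\sum_(k < N) b k x xi * 'D_(ev k) (a j) x) * dxi j T x xi.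
Proof.
move=> ha hb hdxT hdxiT hc.
have e1 : forall j, dxi j (fun x xi => \sum_(k < N) b k x xi * dx k T x xi) x xi =
   \sum_(k < N) (b k x xi * dx k (dxi j T) x xi + dx k T x xi * dxi j (b k) x xi).
  move=> j. rewrite dxi_sum.
  2: move=> k _; exact: DXI_mul2.
  apply: eq_bigr => k _. rewrite dxi_mul2; [|exact: hb|exact: hdxT].

  rewrite hc. done.
have e2 : forall k, dx k (fun x xi => \sum_(j < N) a j x * dxi j T x xi) x xi =
   \sum_(j < N) (a j x * dx k (dxi j T) x xi + 'D_(ev k) (a j) x * dxi j T x xi).
  move=> k. rewrite dx_sum; last by move=> j _; apply: DX_mul.

  apply: eq_bigr => j _. rewrite dx_mul; [done|exact: ha|exact: hdxiT].


transitivity (\sum_(j < N) \sum_(k < N) (a j x * (b k x xi * dx k (dxi j T) x xi + dx k T x xi * dxi j (b k) x xi))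
   - \sum_(j < N) \sum_(k < N) (b k x xi * (a j x * dx k (dxi j T) x xi + 'D_(ev k) (a j) x * dxi j T x xi))).

  congr (_ - _).
  apply: eq_bigr => j _. rewrite e1 mulr_sumr. done.
  rewrite [RHS]exchange_big /=. apply: eq_bigr => k _. rewrite e2 mulr_sumr. done.

transitivity (\sum_(j < N) \sum_(k < N) (a j x * dxi j (b k) x xi * dx k T x xi)
    - \sum_(j < N) \sum_(k < N) (b k x xi * 'D_(ev k) (a j) x * dxi j T x xi)).
  rewrite -!sumrB. apply: eq_bigr => j _. rewrite -!sumrB.
  apply: eq_bigr => k _. ring.
congr (_ - _).
  rewrite exchange_big /=. apply: eq_bigr => k _. by rewrite mulr_suml.

by apply: eq_bigr => j _; rewrite mulr_suml.
Qed.

End E.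

End E.

Module F.
Import A B C D E.
From mathcomp Require Import all_boot all_order all_algebra.
From mathcomp Require Import all_classical all_reals all_analysis.
From mathcomp Require Import ring zify.
Import Order.TTheory GRing.Theory Num.Theory.
Import numFieldNormedType.Exports.
Local Open Scope ring_scope.
Set Implicit Arguments. Unset Strict Implicit. Unset Printing Implicit Defensive.

Section F.
Variables (R : realType) (n : nat).
Local Notation VV := (V R n).
Local Notation N := (n + n + 1)%N.
Local Notation symb := (symb R n).
Local Notation G := (@B.G R n).
Local Notation Hom := (@C.Hom R n).
Local Notation DX := (@DX R n).
Local Notation DXI := (@DXI R n).
Local Notation ev k := (@evec R n k).
Local Notation q := (@qidx n).
Local Notation p := (@pidx n).
Local Notation t := (tidx n).

Lemma val_q i : val (q i) = val i. Proof. by []. Qed.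
Lemma val_p i : val (p i) = (n + val i)%N. Proof. by []. Qed.
Lemma val_t : val t = (n + n)%N. Proof. by rewrite /= addn0. Qed.

Lemma qq i j : (q i == q j) = (i == j).
Proof. by rewrite -val_eqE /= val_eqE. Qed.
Lemma pp i j : (p i == p j) = (i == j).
Proof. by rewrite -val_eqE /= eqn_add2l val_eqE. Qed.
Lemma qp i j : (q i == p j) = false.
Proof. apply/negbTE; rewrite -val_eqE /=; have := ltn_ord i; lia. Qed.
Lemma pq i j : (p i == q j) = false.
Proof. by rewrite eq_sym qp. Qed.
Lemma qt i : (q i == t) = false.
Proof. apply/negbTE; rewrite -val_eqE /=; have := ltn_ord i; lia. Qed.
Lemma tq i : (t == q i) = false.
Proof. by rewrite eq_sym qt. Qed.
Lemma pt i : (p i == t) = false.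
Proof. apply/negbTE; rewrite -val_eqE /=; have := ltn_ord i; lia. Qed.
Lemma tp i : (t == p i) = false.
Proof. by rewrite eq_sym pt. Qed.
Lemma tt' : (t == t) = true. Proof. exact: eqxx. Qed.

Definition idxE := (qq, pp, qp, pq, qt, tq, pt, tp, tt').

Lemma sum_split (F : 'I_N -> R) :
  \sum_(j < N) F j = \sum_(i < n) F (q i) + \sum_(i < n) F (p i) + F t.
Proof. by rewrite big_split_ord big_split_ord big_ord1. Qed.

Lemma idx_cases (k : 'I_N) : (exists i, k = q i) \/ (exists i, k = p i) \/ k = t.
Proof.
rewrite -(splitK k); case: (fintype.split k) => [j|j] /=.
  rewrite -(splitK j); case: (fintype.split j) => [i|i] /=.
    by left; exists i.
  by right; left; exists i.
by right; right; rewrite /tidx (fintype.ord1 j).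
Qed.

Definition acoef (j : 'I_N) (x : VV) : R :=
  match fintype.split j with
  | inl j' => match fintype.split j' with
              | inl i => 2^-1 * x 0 (p i)
              | inr i => - (2^-1 * x 0 (q i)) end
  | inr _ => - 2^-1 end.

Lemma acoef_q i : acoef (q i) = fun x => 2^-1 * x 0 (p i).
Proof. by rewrite /acoef /qidx (unsplitK (inl _)) (unsplitK (inl _)). Qed.
Lemma acoef_p i : acoef (p i) = fun x => - (2^-1 * x 0 (q i)).
Proof. by rewrite /acoef /pidx (unsplitK (inl _)) (unsplitK (inr _)). Qed.
Lemma acoef_t : acoef t = fun x => - 2^-1.
Proof. by rewrite /acoef /tidx (unsplitK (inr _)). Qed.

Definition bco (k : 'I_N) : symb := fun x xi =>
  match fintype.split k with
  | inl k' => match fintype.split k' with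
              | inl i => - xi 0 (p i) + xi 0 t * x 0 (q i)
              | inr i => xi 0 (q i) + xi 0 t * x 0 (p i) end
  | inr _ => - Esxi x xi end.

Lemma bco_q i : bco (q i) = fun x xi => - xi 0 (p i) + xi 0 t * x 0 (q i).
Proof. by rewrite /bco /qidx (unsplitK (inl _)) (unsplitK (inl _)). Qed.
Lemma bco_p i : bco (p i) = fun x xi => xi 0 (q i) + xi 0 t * x 0 (p i).
Proof. by rewrite /bco /pidx (unsplitK (inl _)) (unsplitK (inr _)). Qed.
Lemma bco_t : bco t = fun x xi => - Esxi x xi.
Proof. by rewrite /bco /tidx (unsplitK (inr _)). Qed.

Lemma iP T x xi : ialpha T x xi = \sum_(j < N) acoef j x * dxi j T x xi.
Proof.
rewrite sum_split acoef_t.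
under [X in _ = X + _ + _]eq_bigr do rewrite acoef_q.
under [X in _ = _ + X + _]eq_bigr do rewrite acoef_p.
rewrite /ialpha sumrB !mulrBr !mulr_sumr -sumrN.
congr (_ + _ + _).
- by apply: eq_bigr => i _; rewrite mulrA.
- by apply: eq_bigr => i _; rewrite mulrA mulNr.
- by rewrite mulNr.
Qed.

Lemma DQ T x xi : Dop T x xi = \sum_(k < N) bco k x xi * dx k T x xi.
Proof.
rewrite sum_split bco_t.
under [X in _ = X + _ + _]eq_bigr do rewrite bco_q.
under [X in _ = _ + X + _]eq_bigr do rewrite bco_p.
rewrite /Dop /EsS /Esxi /= mulNr.
congr (_ + _).
rewrite mulr_sumr -!big_split /=; apply: eq_bigr => i _; ring.
Qed.

End F.

End F.

Module G.
Import A B C D E F.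
From mathcomp Require Import all_boot all_order all_algebra.
From mathcomp Require Import all_classical all_reals all_analysis.
From mathcomp Require Import ring zify.
Import Order.TTheory GRing.Theory Num.Theory.
Import numFieldNormedType.Exports.
Local Open Scope ring_scope.
Set Implicit Arguments. Unset Strict Implicit. Unset Printing Implicit Defensive.

Section GG.
Variables (R : realType) (n : nat).
Local Notation VV := (V R n).
Local Notation N := (n + n + 1)%N.
Local Notation symb := (symb R n).
Local Notation Hom := (@C.Hom R n).
Local Notation DX := (@DX R n).
Local Notation DXI := (@DXI R n).
Local Notation ev k := (@evec R n k).
Local Notation q := (@qidx n).
Local Notation p := (@pidx n).
Local Notation t := (tidx n).
Local Notation acoef := (@acoef R n).
Local Notation bco := (@bco R n).

Lemma derC' (c : R) (x v : VV) : derivable (fun _ : VV => c) x v.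
Proof. exact: derC. Qed.
Lemma derco' (j : 'I_N) (x v : VV) : derivable (fun y : VV => y 0 j) x v.
Proof. exact: derco. Qed.

Ltac der := repeat first [ apply: derC' | apply: derco' | apply: derD | apply: derN | apply: derM
   | (apply: dersum => ? ?) ].

Lemma dlin (c : R) (l : 'I_N) (x v : VV) : 'D_v (fun y : VV => c * y 0 l) x = c * v 0 l.
Proof. rewrite (dM (@derC' c x v) (@derco' l x v)). by rewrite dco dC mulr0 addr0. Qed.

Lemma dxi_bq i j x xi : dxi j (bco (q i)) x xi = - ev j 0 (p i) + ev j 0 t * x 0 (q i).
Proof.
rewrite bco_q /dxi /=.
rewrite (dD (derN (@derco' (p i) xi (ev j))) (derM (@derco' t xi (ev j)) (@derC' (x 0 (q i)) xi (ev j)))).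
rewrite (dN (@derco' (p i) xi (ev j))) (dM (@derco' t xi (ev j)) (@derC' (x 0 (q i)) xi (ev j))).
by rewrite !dco dC; ring.
Qed.

Lemma dxi_bp i j x xi : dxi j (bco (p i)) x xi = ev j 0 (q i) + ev j 0 t * x 0 (p i).
Proof.
rewrite bco_p /dxi /=.
rewrite (dD (@derco' (q i) xi (ev j)) (derM (@derco' t xi (ev j)) (@derC' (x 0 (p i)) xi (ev j)))).
rewrite (dM (@derco' t xi (ev j)) (@derC' (x 0 (p i)) xi (ev j))).
by rewrite !dco dC; ring.
Qed.

Lemma dxi_bt j x xi : dxi j (bco t) x xi =
  - \sum_(i < n) (x 0 (p i) * ev j 0 (p i) + x 0 (q i) * ev j 0 (q i)).
Proof.
have hd : forall i, derivable (fun y : VV => x 0 (p i) * y 0 (p i) + x 0 (q i) * y 0 (q i)) xi (ev j).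
  move=> i; exact: (derD (derM (@derC' _ _ _) (@derco' _ _ _)) (derM (@derC' _ _ _) (@derco' _ _ _))).
rewrite bco_t /dxi /Esxi /=.
rewrite (dN (@dersum R n 'I_n (index_enum _) (fun _ => true) (fun i (y : VV) => x 0 (p i) * y 0 (p i) + x 0 (q i) * y 0 (q i)) xi (ev j) (fun i _ => hd i))).
rewrite (@dsum R n 'I_n (index_enum _) (fun _ => true) (fun i (y : VV) => x 0 (p i) * y 0 (p i) + x 0 (q i) * y 0 (q i)) xi (ev j) (fun i _ => hd i)).
congr (- _); apply: eq_bigr => i _.
rewrite (dD (derM (@derC' _ _ _) (@derco' _ _ _)) (derM (@derC' _ _ _) (@derco' _ _ _))).
rewrite (dM (@derC' _ _ _) (@derco' _ _ _)) (dM (@derC' _ _ _) (@derco' _ _ _)).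
by rewrite !dco !dC; ring.
Qed.

Lemma AB0 k x xi : \sum_(j < N) acoef j x * dxi j (bco k) x xi = 0.
Proof.
case: (idx_cases k) => [[i ->]|[[i ->]|->]].
- under eq_bigr do rewrite dxi_bq.
  transitivity (- (\sum_(j < N) acoef j x * ev j 0 (p i)) + (\sum_(j < N) acoef j x * ev j 0 t) * x 0 (q i)).
    rewrite mulr_suml -sumrN -big_split; apply: eq_bigr => j _ /=; ring.
  rewrite !(sum_delta (fun j => acoef j x)) acoef_p acoef_t /=; ring.
- under eq_bigr do rewrite dxi_bp.
  transitivity ((\sum_(j < N) acoef j x * ev j 0 (q i)) + (\sum_(j < N) acoef j x * ev j 0 t) * x 0 (p i)).
    rewrite mulr_suml -big_split; apply: eq_bigr => j _ /=; ring.
  rewrite !(sum_delta (fun j => acoef j x)) acoef_q acoef_t /=; ring.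
- under eq_bigr do rewrite dxi_bt mulrN mulr_sumr.
  rewrite sumrN exchange_big /= big1 ?oppr0 // => i _.
  transitivity (x 0 (p i) * (\sum_(j < N) acoef j x * ev j 0 (p i))
              + x 0 (q i) * (\sum_(j < N) acoef j x * ev j 0 (q i))).
    rewrite !mulr_sumr -big_split; apply: eq_bigr => j _ /=; ring.
  rewrite !(sum_delta (fun j => acoef j x)) acoef_p acoef_q /=; ring.
Qed.

Lemma BA_q i x xi : \sum_(k < N) bco k x xi * 'D_(ev k) (acoef (q i)) x = 2^-1 * bco (p i) x xi.
Proof.
rewrite acoef_q; under eq_bigr do rewrite dlin mulrCA.
by rewrite -mulr_sumr (sum_delta (fun k => bco k x xi)).
Qed.

Lemma BA_p i x xi : \sum_(k < N) bco k x xi * 'D_(ev k) (acoef (p i)) x = - (2^-1 * bco (q i) x xi).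
Proof.
rewrite acoef_p; under eq_bigr => k do rewrite (dN (derM (@derC' _ x (ev k)) (@derco' (q i) x (ev k)))) dlin.
under eq_bigr do rewrite mulrN mulrCA.
by rewrite sumrN -mulr_sumr (sum_delta (fun k => bco k x xi)).
Qed.

Lemma BA_t x xi : \sum_(k < N) bco k x xi * 'D_(ev k) (acoef t) x = 0.
Proof.
rewrite acoef_t big1 // => k _; by rewrite dC mulr0.
Qed.

Lemma ha_ok j x v : derivable (acoef j) x v.
Proof.
case: (idx_cases j) => [[i ->]|[[i ->]|->]]; [rewrite acoef_q|rewrite acoef_p|rewrite acoef_t].
- exact: (derM (@derC' _ _ _) (@derco' _ _ _)).
- exact: (derN (derM (@derC' _ _ _) (@derco' _ _ _))).
- exact: (@derC' _ _ _).
Qed.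

Lemma hb_ok k : DXI (bco k).
Proof.
move=> x xi v.
case: (idx_cases k) => [[i ->]|[[i ->]|->]]; [rewrite bco_q|rewrite bco_p|rewrite bco_t /Esxi].
- exact: (derD (derN (@derco' _ _ _)) (derM (@derco' _ _ _) (@derC' _ _ _))).
- exact: (derD (@derco' _ _ _) (derM (@derco' _ _ _) (@derC' _ _ _))).
- apply: derN; apply: (@dersum R n 'I_n (index_enum _) (fun _ => true)) => i _.
  exact: (derD (derM (@derC' _ _ _) (@derco' _ _ _)) (derM (@derC' _ _ _) (@derco' _ _ _))).
Qed.

End GG.

End G.

Module H.
Import A B C D E F G.
From mathcomp Require Import all_boot all_order all_algebra.
From mathcomp Require Import all_classical all_reals all_analysis.
From mathcomp Require Import ring zify.
Import Order.TTheory GRing.Theory Num.Theory.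
Import numFieldNormedType.Exports.
Local Open Scope ring_scope.
Set Implicit Arguments. Unset Strict Implicit. Unset Printing Implicit Defensive.

Section H.
Variables (R : realType) (n : nat).
Local Notation VV := (V R n).
Local Notation N := (n + n + 1)%N.
Local Notation symb := (symb R n).
Local Notation Hom := (@C.Hom R n).
Local Notation DX := (@DX R n).
Local Notation DXI := (@DXI R n).
Local Notation ev k := (@evec R n k).
Local Notation q := (@qidx n).
Local Notation p := (@pidx n).
Local Notation t := (tidx n).
Local Notation acoef := (@acoef R n).
Local Notation bco := (@bco R n).

Lemma iD_comm m S : Hom m S -> forall x xi,
  ialpha (Dop S) x xi = Dop (ialpha S) x xi - 2^-1 * m%:R * S x xi - xi 0 t * ialpha S x xi.
Proof.
move=> HS x xi.
have hc : forall k j x xi, dxi j (dx k S) x xi = dx k (dxi j S) x xi.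
  by move=> k j x' xi'; rewrite (comm_dx_dxi HS).
have C := @commPQ R n acoef bco S x xi (@ha_ok R n) (@hb_ok R n)
  (fun k => Hom_DXI (Hom_dx k HS)) (fun j => Hom_DX (Hom_dxi1 j HS)) hc.
have DE : (fun x xi => \sum_(k < N) bco k x xi * dx k S x xi) = Dop S.
  by apply: funext2 => x' xi'; rewrite DQ.
have IE : (fun x xi => \sum_(j < N) acoef j x * dxi j S x xi) = ialpha S.
  by apply: funext2 => x' xi'; rewrite iP.
rewrite DE IE -iP -DQ in C.
have -> : ialpha (Dop S) x xi = Dop (ialpha S) x xi + (ialpha (Dop S) x xi - Dop (ialpha S) x xi) by ring.
rewrite C big1; last by move=> k _; rewrite AB0 mul0r.
have Eu := euler HS x xi; rewrite sum_split in Eu.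
have S2 : \sum_(j < N) (\sum_(k < N) bco k x xi * 'D_(ev k) (acoef j) x) * dxi j S x xi
   = 2^-1 * (m%:R * S x xi - xi 0 t * dxi t S x xi)
     + xi 0 t * 2^-1 * \sum_(i < n) (x 0 (p i) * dxi (q i) S x xi - x 0 (q i) * dxi (p i) S x xi).
  rewrite sum_split BA_t mul0r addr0.
  transitivity (\sum_(i < n) (2^-1 * bco (p i) x xi) * dxi (q i) S x xi
     + \sum_(i < n) (- (2^-1 * bco (q i) x xi)) * dxi (p i) S x xi).
    by congr (_ + _); apply: eq_bigr => i _; rewrite ?BA_q ?BA_p.
  rewrite -Eu.
  have -> : forall a b c : R, a + b + c - c = a + b by move=> *; ring.
  rewrite mulrDr !mulr_sumr -!big_split /=; apply: eq_bigr => i _; rewrite bco_p bco_q /=; ring.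
rewrite S2.
have -> : ialpha S x xi = 2^-1 * (\sum_(i < n) (x 0 (p i) * dxi (q i) S x xi
   - x 0 (q i) * dxi (p i) S x xi) - dxi t S x xi) by [].
ring.
Qed.

End H.

End H.

Module I.
Import A B C D E F G H.
From mathcomp Require Import all_boot all_order all_algebra.
From mathcomp Require Import all_classical all_reals all_analysis.
From mathcomp Require Import ring zify.
Import Order.TTheory GRing.Theory Num.Theory.
Import numFieldNormedType.Exports.
Local Open Scope ring_scope.
Set Implicit Arguments. Unset Strict Implicit. Unset Printing Implicit Defensive.

Section I.
Variables (R : realType) (n : nat).
Local Notation VV := (V R n).
Local Notation N := (n + n + 1)%N.
Local Notation symb := (symb R n).
Local Notation Hom := (@C.Hom R n).
Local Notation DX := (@DX R n).
Local Notation DXI := (@DXI R n).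
Local Notation ev k := (@evec R n k).
Local Notation q := (@qidx n).
Local Notation p := (@pidx n).
Local Notation t := (tidx n).
Local Notation acoef := (@acoef R n).
Local Notation bco := (@bco R n).

Lemma ialpha_add S T x xi : DXI S -> DXI T ->
  ialpha (fun x xi => S x xi + T x xi) x xi = ialpha S x xi + ialpha T x xi.
Proof.
move=> hS hT; rewrite !iP -big_split /=; apply: eq_bigr => j _.
by rewrite (dxi_add j x xi hS hT) mulrDr.
Qed.

Lemma ialpha_scale (c : R) S x xi : DXI S ->
  ialpha (fun x xi => c * S x xi) x xi = c * ialpha S x xi.
Proof.
move=> hS; rewrite !iP mulr_sumr; apply: eq_bigr => j _.
by rewrite (@dxi_mul R n j (fun _ => c) S x xi hS) mulrCA.
Qed.

Lemma ialpha_sum (I : Type) (r : seq I) (P : pred I) (F : I -> symb) x xi :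
  (forall i, P i -> DXI (F i)) ->
  ialpha (fun x xi => \sum_(i <- r | P i) F i x xi) x xi = \sum_(i <- r | P i) ialpha (F i) x xi.
Proof.
move=> hF; rewrite iP.
transitivity (\sum_(j < N) \sum_(i <- r | P i) acoef j x * dxi j (F i) x xi).
  apply: eq_bigr => j _; rewrite dxi_sum; [by rewrite mulr_sumr | exact: hF].
rewrite exchange_big /=; apply: eq_bigr => i _; by rewrite iP.
Qed.

Lemma ialpha_ext (S T : symb) (x xi : VV) : (forall x xi, S x xi = T x xi) -> ialpha S x xi = ialpha T x xi.
Proof. by move=> e; rewrite (funext2 e). Qed.

Lemma Dop_add S T x xi : DX S -> DX T ->
  Dop (fun x xi => S x xi + T x xi) x xi = Dop S x xi + Dop T x xi.
Proof.
move=> hS hT; rewrite !DQ -big_split /=; apply: eq_bigr => j _.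
by rewrite (dx_add j x xi hS hT) mulrDr.
Qed.

Lemma Dop_scale (c : R) S x xi : DX S ->
  Dop (fun x xi => c * S x xi) x xi = c * Dop S x xi.
Proof.
move=> hS; rewrite !DQ mulr_sumr; apply: eq_bigr => j _.
rewrite (@dx_mul R n j (fun _ => c) S x xi (fun x v => @derC' R n c x v) hS) dC; ring.
Qed.

Lemma Dop_zero (x xi : VV) : Dop (fun (_ _ : VV) => 0 : R) x xi = 0.
Proof. rewrite DQ big1 // => j _; by rewrite dx_zero mulr0. Qed.

Lemma Xop_add delta m S T x xi : DX S -> DX T ->
  Xop delta m (fun x xi => S x xi + T x xi) x xi = Xop delta m S x xi + Xop delta m T x xi.
Proof. move=> hS hT; rewrite /Xop Dop_add //; ring. Qed.

Lemma Xop_scale delta m (c : R) S x xi : DX S ->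
  Xop delta m (fun x xi => c * S x xi) x xi = c * Xop delta m S x xi.
Proof. move=> hS; rewrite /Xop Dop_scale //; ring. Qed.

Lemma Xop_zero delta m : Xop delta m (fun (_ _ : VV) => 0 : R) = (fun _ _ => 0).
Proof. apply: funext2 => x xi; rewrite /Xop Dop_zero; ring. Qed.

Lemma Xiter_zero delta l m : Xiter delta l m (fun (_ _ : VV) => 0 : R) = (fun _ _ => 0).
Proof. elim: l => [|l IH] //=; by rewrite IH Xop_zero. Qed.

End I.

End I.

Module J.
Import A B C D E F G H I.
From mathcomp Require Import all_boot all_order all_algebra.
From mathcomp Require Import all_classical all_reals all_analysis.
From mathcomp Require Import ring zify.
Import Order.TTheory GRing.Theory Num.Theory.
Import numFieldNormedType.Exports.
Local Open Scope ring_scope.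
Set Implicit Arguments. Unset Strict Implicit. Unset Printing Implicit Defensive.

Section J.
Variables (R : realType) (n : nat).
Local Notation VV := (V R n).
Local Notation N := (n + n + 1)%N.
Local Notation symb := (symb R n).
Local Notation Hom := (@C.Hom R n).
Local Notation DX := (@DX R n).
Local Notation DXI := (@DXI R n).
Local Notation ev k := (@evec R n k).
Local Notation q := (@qidx n).
Local Notation p := (@pidx n).
Local Notation t := (tidx n).
Local Notation acoef := (@acoef R n).
Local Notation bco := (@bco R n).

Lemma Hom_ialpha m S : Hom m S -> Hom m.-1 (ialpha S).
Proof.
move=> HS; rewrite /ialpha; apply: HomZ; apply: HomB; last exact: Hom_dxi1.
apply: Hom_sum => i _; apply: HomB; apply: Homco; exact: Hom_dxi1.
Qed.

Lemma ialpha0 S : Hom 0 S -> forall x xi, ialpha S x xi = 0.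
Proof. move=> HS x xi; rewrite iP big1 // => j _; by rewrite (Hom_dxi0 j HS) mulr0. Qed.

Lemma Hom_Dop m S : Hom m S -> Hom m.+1 (Dop S).
Proof.
move=> HS.
have hA : Hom m.+1 (fun x xi => \sum_(i < n) (xi 0 (q i) * dx (p i) S x xi - xi 0 (p i) * dx (q i) S x xi)).
  apply: Hom_sum => i _; apply: HomB; apply: Hxi; exact: Hom_dx.
have hB : Hom m.+1 (fun x xi => xi 0 t * \sum_(i < n) (x 0 (p i) * dx (p i) S x xi + x 0 (q i) * dx (q i) S x xi)).
  apply: Hxi; apply: Hom_sum => i _; apply: Hadd; apply: Homco; exact: Hom_dx.
have hC : Hom m.+1 (fun x xi => \sum_(i < n) (xi 0 (p i) * (x 0 (p i) * dx t S x xi) + xi 0 (q i) * (x 0 (q i) * dx t S x xi))).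
  apply: Hom_sum => i _; apply: Hadd; apply: Hxi; apply: Homco; exact: Hom_dx.
apply: Hom_ext (HomB (Hadd hA hB) hC) _ => x xi.
rewrite /Dop /EsS /Esxi mulr_suml; congr (_ - _); apply: eq_bigr => i _; ring.
Qed.

Lemma Hom_Xop delta m' m S : Hom m S -> Hom m.+1 (Xop delta m' S).
Proof.
move=> HS; rewrite /Xop; apply: Hadd; first exact: Hom_Dop.
apply: Hom_ext (HomZ _ (Hxi t HS)) _ => x xi; by rewrite mulrA.
Qed.

Lemma Hom_Xiter delta d m S l : Hom d S -> Hom (d + l) (Xiter delta l m S).
Proof.
move=> HS; elim: l => [|l IH] /=; first by rewrite addn0.
rewrite addnS; exact: Hom_Xop.
Qed.

Lemma i_xit (c : R) S x xi : DXI S ->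
  ialpha (fun x xi => c * xi 0 t * S x xi) x xi = c * (xi 0 t * ialpha S x xi - 2^-1 * S x xi).
Proof.
move=> hS.
have E : forall j, dxi j (fun x xi => c * xi 0 t * S x xi) x xi
   = c * (xi 0 t * dxi j S x xi + ev j 0 t * S x xi).
  move=> j; rewrite /dxi (dM (derM (@derC' R n c xi (ev j)) (@derco' R n t xi (ev j))) (hS x xi (ev j))).
  rewrite (dM (@derC' R n c xi (ev j)) (@derco' R n t xi (ev j))) dC dco; ring.
rewrite iP.
transitivity (\sum_(j < N) (c * xi 0 t * (acoef j x * dxi j S x xi) + c * S x xi * (acoef j x * ev j 0 t))).
  apply: eq_bigr => j _; rewrite E; ring.
rewrite big_split /= -!mulr_sumr (sum_delta (fun j => acoef j x)) acoef_t -iP; ring.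
Qed.

Lemma MI delta m S : Hom m S -> forall x xi,
  ialpha (Xop delta m S) x xi = Xop delta m.-1 (ialpha S) x xi
     - 2^-1 * (2 * (n + 1)%:R * delta + 2 * m%:R) * S x xi.
Proof.
move=> HS x xi.
have -> : Xop delta m S = fun x xi => Dop S x xi + (2 * (n + 1)%:R * delta + m%:R) * xi 0 t * S x xi by [].
rewrite ialpha_add; last 2 first.
- exact: Hom_DXI (Hom_Dop HS).
- exact: Hom_DXI (Hom_ext (HomZ (2 * (n + 1)%:R * delta + m%:R) (Hxi t HS)) (fun x xi => mulrA _ _ _)).
rewrite (iD_comm HS) i_xit; last exact: Hom_DXI HS.
case: m HS => [|m] HS.
  have Z : ialpha S = fun _ _ => 0 by apply: funext2; exact: ialpha0.
  rewrite Z /Xop Dop_zero /=; ring.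
rewrite /Xop /= -natr1; ring.
Qed.

Lemma XI1 delta d l S : Hom d S -> forall x xi,
  Xop delta (d + l).-1 (Xiter delta l d.-1 (ialpha S)) x xi = Xiter delta l.+1 d.-1 (ialpha S) x xi.
Proof.
case: d => [|d] HS x xi.
  have Z : ialpha S = fun _ _ => 0 by apply: funext2; exact: ialpha0.
  by rewrite Z !Xiter_zero Xop_zero.
by rewrite /= ?addSn.
Qed.

Lemma XI2 (delta : R) d l (S : symb) (x xi : VV) :
  rcoef n delta l d * Xop delta (d + l).-1 (Xiter delta l.-1 d S) x xi
  = rcoef n delta l d * Xiter delta l d S x xi.
Proof.
case: l => [|l]; first by rewrite /rcoef /= !mul0r !oppr0 !mul0r.
by rewrite /= ?addnS.
Qed.

Lemma IT delta d S : Hom d S -> forall l x xi,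
  ialpha (Xiter delta l d S) x xi
  = Xiter delta l d.-1 (ialpha S) x xi + rcoef n delta l d * Xiter delta l.-1 d S x xi.
Proof.
move=> HS; elim=> [|l IH] x xi.
  by rewrite /= /rcoef /= !mul0r !oppr0 !mul0r addr0.
rewrite /= (MI delta (Hom_Xiter delta d (S := S) l HS)).
have IHf : ialpha (Xiter delta l d S)
  = fun x xi => Xiter delta l d.-1 (ialpha S) x xi + rcoef n delta l d * Xiter delta l.-1 d S x xi.
  by apply: funext2 => ??; rewrite IH.
rewrite IHf Xop_add; last 2 first.
- apply: Hom_DX; apply: Hom_Xiter; exact: Hom_ialpha HS.
- apply: DX_c; apply: Hom_DX; apply: Hom_Xiter; exact: HS.
rewrite Xop_scale; last by apply: Hom_DX; apply: Hom_Xiter; exact: HS.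
rewrite (XI1 delta l HS) XI2 /= /rcoef.
rewrite !natrD -natr1; ring.
Qed.

End J.

End J.

Module K.
Import A B C D E F G H I J.
From mathcomp Require Import all_boot all_order all_algebra.
From mathcomp Require Import all_classical all_reals all_analysis.
From mathcomp Require Import ring zify.
Import Order.TTheory GRing.Theory Num.Theory.
Import numFieldNormedType.Exports.
Local Open Scope ring_scope.
Set Implicit Arguments. Unset Strict Implicit. Unset Printing Implicit Defensive.

Section K.
Variables (R : realType) (n : nat).
Local Notation VV := (V R n).
Local Notation N := (n + n + 1)%N.
Local Notation symb := (symb R n).
Local Notation Hom := (@C.Hom R n).
Local Notation DX := (@DX R n).
Local Notation DXI := (@DXI R n).

Lemma Hpow (i : 'I_N) e d T : Hom d T -> Hom (e + d) (fun x xi => xi 0 i ^+ e * T x xi).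
Proof.
move=> HT; elim: e => [|e IH].
  by apply: Hom_ext HT _ => x xi; rewrite expr0 mul1r.
rewrite addSn; apply: Hom_ext (Hxi i IH) _ => x xi; by rewrite exprS mulrA.
Qed.

Lemma Hom_mono (r : seq 'I_N) (e : 'I_N -> nat) (f : VV -> R) : B.G f ->
  Hom (\sum_(i <- r) e i)%N (fun x xi => f x * \prod_(i <- r) xi 0 i ^+ e i).
Proof.
move=> Gf; elim: r => [|i r IH].
  rewrite big_nil; apply: Hom_ext (H0 Gf) _ => x xi; by rewrite big_nil mulr1.
rewrite big_cons; apply: Hom_ext (Hpow i (e i) IH) _ => x xi.
by rewrite big_cons mulrCA.
Qed.

Lemma Hom_of_symbol m S : is_symbol m S -> Hom m S.
Proof.
move=> [c [hc hS]].
apply: Hom_ext _ (fun x xi => esym (hS x xi)).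
apply: Hom_sum => a /eqP ha.
have := Hom_mono (index_enum _) (fun i => nat_of_ord (a i)) (Gsm (hc a)).
by rewrite /= ha.
Qed.

Lemma Hom_iter d S : Hom d S -> forall j, Hom (d - j) (iter j (@ialpha R n) S).
Proof.
move=> HS; elim=> [|j IH] /=; first by rewrite subn0.
rewrite subnS; exact: Hom_ialpha.
Qed.

Lemma DXI_c (c : R) S : DXI S -> DXI (fun x xi => c * S x xi).
Proof. move=> hS x xi v; exact: derM (@derC' R n c xi v) (hS _ _ _). Qed.

Lemma DXI_sum (I : Type) (r : seq I) (P : pred I) (F : I -> symb) :
  (forall i, P i -> DXI (F i)) -> DXI (fun x xi => \sum_(i <- r | P i) F i x xi).
Proof. move=> hF x xi v; apply: dersum => i Pi; exact: hF. Qed.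

Lemma rnz (delta : R) k (hk : (1 <= k)%N)
  (hdelta : forall p : nat, (k - 1 <= p <= 2 * k - 2)%N ->
              delta != - (p%:R / (2 * (n + 1)%:R))) l :
  (1 <= l <= k)%N -> rcoef n delta l (k - l) != 0.
Proof.
move=> /andP[l1 lk]; rewrite /rcoef mulf_neq0 //.
  rewrite oppr_eq0 mulf_neq0 // ?invr_eq0 ?pnatr_eq0 //; lia.
apply/eqP => h.
have hp : ((2 * (k - l) + l - 1)%N%:R : R) = 2 * (k - l)%:R + l%:R - 1.
  rewrite natrB; last by lia.
  by rewrite natrD natrM.
have h2 : (2 * (n + 1)%:R : R) != 0 by rewrite mulf_neq0 // pnatr_eq0; lia.
have := hdelta (2 * (k - l) + l - 1)%N; rewrite hp.
have -> : (k - 1 <= 2 * (k - l) + l - 1 <= 2 * k - 2)%N by apply/andP; split; lia.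
move=> /(_ isT) /negP; apply.
have -> : delta = (2 * (n + 1)%:R * delta) / (2 * (n + 1)%:R) by field.
have -> : 2 * (n + 1)%:R * delta = - (2 * (k - l)%:R + l%:R - 1).
  apply/eqP; rewrite -subr_eq0; apply/eqP; rewrite -h; ring.
by rewrite mulNr.
Qed.

End K.

End K.

Module L.
Import A B C D E F G H I J K.
From mathcomp Require Import all_boot all_order all_algebra.
From mathcomp Require Import all_classical all_reals all_analysis.
From mathcomp Require Import ring zify.
Import Order.TTheory GRing.Theory Num.Theory.
Import numFieldNormedType.Exports.
Local Open Scope ring_scope.
Set Implicit Arguments. Unset Strict Implicit. Unset Printing Implicit Defensive.

Section L.
Variables (R : realType) (n : nat).
Local Notation VV := (V R n).
Local Notation N := (n + n + 1)%N.
Local Notation symb := (symb R n).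
Local Notation Hom := (@C.Hom R n).
Local Notation DXI := (@DXI R n).

Lemma bstep (delta : R) k (hk : (1 <= k)%N)
  (hdelta : forall p : nat, (k - 1 <= p <= 2 * k - 2)%N ->
              delta != - (p%:R / (2 * (n + 1)%:R))) l :
  (l < k)%N -> bcoef n delta k l.+1 * rcoef n delta l.+1 (k - l.+1) = - bcoef n delta k l.
Proof.
move=> lk; have rz : rcoef n delta l.+1 (k - l.+1) != 0 by apply: rnz => //; apply/andP.
rewrite /bcoef big_nat_recr //= invfM invrN mulrN mulNr -mulrA mulVf ?mulr1 //.
Qed.

Lemma main_aux (delta : R) k (hk : (1 <= k)%N)
  (hdelta : forall p : nat, (k - 1 <= p <= 2 * k - 2)%N ->
              delta != - (p%:R / (2 * (n + 1)%:R))) (S : symb) :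
  Hom (k - 1) S -> forall x xi, ialpha (s_op delta k S) x xi = S x xi.
Proof.
move=> HS x xi.
pose F (l : nat) : symb := fun x xi => bcoef n delta k l * Xiter delta l (k - l) (iter l.-1 (@ialpha R n) S) x xi.
have hF : forall l, DXI (F l).
  move=> l; apply: DXI_c; apply: Hom_DXI; apply: Hom_Xiter; apply: Hom_iter; exact: HS.
have sE : s_op delta k S = fun x xi => -1 * \sum_(1 <= l < k.+1 | (1 <= l < k.+1)%N && true) F l x xi.
  by apply: funext2 => x' xi'; rewrite /s_op mulN1r big_nat_cond /F.
rewrite sE ialpha_scale; last exact: DXI_sum (fun l _ => hF l).
rewrite ialpha_sum; last by move=> l _; exact: hF.
pose U j := Xiter delta j (k - 1 - j) (iter j (@ialpha R n) S) x xi.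
pose V l := if (l < k)%N then U l else 0.
pose f l := bcoef n delta k l * V l.
have step : forall l, (1 <= l < k.+1)%N -> ialpha (F l) x xi = f l - f l.-1.
  case=> [//|l] /andP[_ lk].
  have Hl : Hom (k - l.+1) (iter l (@ialpha R n) S).
    have -> : (k - l.+1 = k - 1 - l)%N by lia.
    exact: Hom_iter.
  rewrite /F ialpha_scale; last by apply: Hom_DXI; apply: Hom_Xiter; exact: Hl.
  rewrite (IT delta Hl).
  have e2 : Xiter delta l (k - l.+1) (iter l (@ialpha R n) S) x xi = V l.
    rewrite /V /U (_ : (l < k)%N = true); last by lia.
    by rewrite (_ : (k - l.+1 = k - 1 - l)%N); last by lia.
  have e1 : Xiter delta l.+1 (k - l.+1).-1 (ialpha (iter l (@ialpha R n) S)) x xi = V l.+1.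
    rewrite /V /U; case: ltnP => hl.
      by rewrite (_ : ((k - l.+1).-1 = k - 1 - l.+1)%N) //; rewrite -subn1; lia.
    have H0l : Hom 0 (iter l (@ialpha R n) S) by rewrite (_ : 0%N = (k - l.+1)%N) //; lia.
    have Z : ialpha (iter l (@ialpha R n) S) = fun _ _ => 0 by apply: funext2; exact: ialpha0.
    by rewrite Z Xiter_zero.
  rewrite e1 e2 mulrDr mulrA (bstep hk hdelta) //; rewrite /f /=; ring.
transitivity (-1 * \sum_(1 <= l < k.+1 | (1 <= l < k.+1)%N && true) (f l - f l.-1)).
  by congr (_ * _); apply: eq_bigr => l /andP[hl _]; exact: step.
rewrite -big_nat_cond big_add1 /= telescope_sumr //.
rewrite /f /V ltnn hk /U /= /bcoef [\prod_(1 <= j < 1) _]big_geq // invr1 mulr0; ring.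
Qed.

End L.


End L.

Import A B C D E F G H I J K L.
From mathcomp Require Import all_boot all_order all_algebra.
From mathcomp Require Import all_classical all_reals all_analysis.
From mathcomp Require Import ring zify.
Import Order.TTheory GRing.Theory Num.Theory.
Import numFieldNormedType.Exports.
Local Open Scope ring_scope.

Theorem lemma5p1 (R : realType) (n : nat) (hn : (1 <= n)%N) (delta : R)
  (k : nat) (hk : (1 <= k)%N)
  (hdelta : forall p : nat, (k - 1 <= p <= 2 * k - 2)%N ->
              delta != - (p%:R / (2 * (n + 1)%:R)))
  (S : symb R n) :
  is_symbol (k - 1) S ->
  ialpha (s_op delta k S) = S.
Proof.
move=> hS; apply: funext2 => x xi; exact: (main_aux hk hdelta (Hom_of_symbol hS) x xi).
Qed.
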